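(* Let $E$ be a computable abelian group with computable subgroups $A,B,G,H$ such that $E = A\oplus G = B\oplus H$ (internal direct sums), where $A$ and $B$ are isomorphic and cyclic, and let $D=G\cap H$. Let $u\in G$ and $v\in H$ be such that $G=\langle u\rangle\oplus D$ and $H=\langle v\rangle\oplus D$. Then, uniformly in indices for $E,A,B,G,H$ and in $u$ and $v$, one can compute (an index for) a computable isomorphism between $G$ and $H$.
   Context: A computable group is given by an index for a program computing its atomic diagram (domain a subset of $\omega$); a computable subgroup is one whose underlying set is computable, given by an index of its characteristic function. *)

(* Defs.v *)
From Stdlib Require Import Arith.

(* Cantor pairing: a bijection nat * nat -> nat. *)
Definition pair (x y : nat) : nat := (x + y) * (x + y + 1) / 2 + y.

(* Syntax of partial recursive functions (unary, via pairing). *)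
Inductive prf : Type :=
| PZero | PSucc | PId | PFst | PSnd
| PPair (f g : prf)
| PComp (f g : prf)
| PPrim (f g : prf)
| PMu (f : prf).

Inductive eval : prf -> nat -> nat -> Prop :=
| ev_zero x : eval PZero x 0
| ev_succ x : eval PSucc x (S x)
| ev_id x : eval PId x x
| ev_fst a b : eval PFst (pair a b) a
| ev_snd a b : eval PSnd (pair a b) b
| ev_pair f g x a b : eval f x a -> eval g x b -> eval (PPair f g) x (pair a b)
| ev_comp f g x y z : eval g x y -> eval f y z -> eval (PComp f g) x z
| ev_prim0 f g x y : eval f x y -> eval (PPrim f g) (pair x 0) y
| ev_primS f g x n y z :
    eval (PPrim f g) (pair x n) y -> eval g (pair x (pair n y)) z ->
    eval (PPrim f g) (pair x (S n)) z
| ev_mu f x n :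
    eval f (pair x n) 0 ->
    (forall m, m < n -> exists k, eval f (pair x m) (S k)) ->
    eval (PMu f) x n.

Fixpoint encode (p : prf) : nat :=
  match p with
  | PZero => pair 0 0
  | PSucc => pair 1 0
  | PId => pair 2 0
  | PFst => pair 3 0
  | PSnd => pair 4 0
  | PPair f g => pair 5 (pair (encode f) (encode g))
  | PComp f g => pair 6 (pair (encode f) (encode g))
  | PPrim f g => pair 7 (pair (encode f) (encode g))
  | PMu f => pair 8 (encode f)
  end.

(* phi e x y : the e-th partial computable function halts on x with output y
   (numbers that code no program index the empty function). *)
Definition phi (e x y : nat) : Prop := exists p, encode p = e /\ eval p x y.

Definition IsAbGroup (dom : nat -> bool) (add : nat -> nat -> nat)
  (neg : nat -> nat) (z : nat) : Prop :=
  dom z = true /\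
  (forall x y, dom x = true -> dom y = true -> dom (add x y) = true) /\
  (forall x, dom x = true -> dom (neg x) = true) /\
  (forall x y w, dom x = true -> dom y = true -> dom w = true ->
     add x (add y w) = add (add x y) w) /\
  (forall x y, dom x = true -> dom y = true -> add x y = add y x) /\
  (forall x, dom x = true -> add z x = x) /\
  (forall x, dom x = true -> add (neg x) x = z).

(* Convention for "index e for a program computing the atomic diagram":
   phi_e <0,x> = 1 or 0 according as x is in the domain;
   phi_e <1,<x,y>> = x + y,  phi_e <2,x> = -x  (x, y in the domain);
   phi_e <3,0> = the zero element. *)
Definition Presents (e : nat) (dom : nat -> bool) (add : nat -> nat -> nat)
  (neg : nat -> nat) (z : nat) : Prop :=
  (forall x, phi e (pair 0 x) (if dom x then 1 else 0)) /\
  (forall x y, dom x = true -> dom y = true -> phi e (pair 1 (pair x y)) (add x y)) /\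
  (forall x, dom x = true -> phi e (pair 2 x) (neg x)) /\
  phi e (pair 3 0) z.

Definition CharIndex (s : nat) (mem : nat -> bool) : Prop :=
  forall x, phi s x (if mem x then 1 else 0).

Definition IsSubgroup (dom : nat -> bool) (add : nat -> nat -> nat)
  (neg : nat -> nat) (z : nat) (mem : nat -> bool) : Prop :=
  (forall x, mem x = true -> dom x = true) /\
  mem z = true /\
  (forall x y, mem x = true -> mem y = true -> mem (add x y) = true) /\
  (forall x, mem x = true -> mem (neg x) = true).

Definition natmul (add : nat -> nat -> nat) (z : nat) (n x : nat) : nat :=
  Nat.iter n (add x) z.

Definition InCyclic (add : nat -> nat -> nat) (neg : nat -> nat) (z : nat)
  (x y : nat) : Prop :=
  exists n, y = natmul add z n x \/ y = neg (natmul add z n x).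

Definition IsCyclic (add : nat -> nat -> nat) (neg : nat -> nat) (z : nat)
  (mem : nat -> bool) : Prop :=
  exists a, mem a = true /\ forall x, mem x = true <-> InCyclic add neg z a x.

Definition InternalDirectSum (add : nat -> nat -> nat) (z : nat)
  (M M1 M2 : nat -> Prop) : Prop :=
  (forall x, M1 x -> M x) /\ (forall x, M2 x -> M x) /\
  (forall x, M1 x -> M2 x -> x = z) /\
  (forall x, M x -> exists a b, M1 a /\ M2 b /\ x = add a b).

Definition SubgroupsIsomorphic (add : nat -> nat -> nat)
  (memA memB : nat -> bool) : Prop :=
  exists h : nat -> nat,
    (forall x, memA x = true -> memB (h x) = true) /\
    (forall x y, memA x = true -> memA y = true -> h x = h y -> x = y) /\
    (forall y, memB y = true -> exists x, memA x = true /\ h x = y) /\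
    (forall x y, memA x = true -> memA y = true -> h (add x y) = add (h x) (h y)).

Definition IsComputableIso (i : nat) (add : nat -> nat -> nat)
  (memG memH : nat -> bool) : Prop :=
  (forall x, memG x = true -> exists y, phi i x y /\ memH y = true) /\
  (forall x y w, memG x = true -> memG y = true -> phi i x w -> phi i y w -> x = y) /\
  (forall y, memH y = true -> exists x, memG x = true /\ phi i x y) /\
  (forall x y a b, memG x = true -> memG y = true -> phi i x a -> phi i y b ->
     phi i (add x y) (add a b)).

(* Main.v *)
Require Import Defs.
From Stdlib Require Import Arith Lia ZArith Classical.

Definition T (s : nat) := s * (s + 1) / 2.
Lemma pair_T x y : pair x y = T (x + y) + y.
Proof. reflexivity. Qed.
Lemma T_S s : T (S s) = T s + S s.
Proof.
  unfold T. replace (S s * (S s + 1)) with (s * (s + 1) + S s * 2) by nia.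
  rewrite Nat.div_add by lia. reflexivity.
Qed.
Lemma T_mono s s' : s <= s' -> T s <= T s'.
Proof. induction 1; [lia| rewrite T_S; lia]. Qed.

Lemma pair_inj a b c d : pair a b = pair c d -> a = c /\ b = d.
Proof.
  rewrite !pair_T. intros H.
  assert (a + b = c + d).
  { destruct (lt_eq_lt_dec (a+b) (c+d)) as [[Hl|He]|Hl]; auto.
    - pose proof (T_mono (S (a+b)) (c+d) Hl). rewrite T_S in H0. lia.
    - pose proof (T_mono (S (c+d)) (a+b) Hl). rewrite T_S in H0. lia. }
  rewrite H0 in H. lia.
Qed.

Lemma pair_surj n : exists a b, n = pair a b.
Proof.
  induction n as [|n [a [b IH]]].
  - exists 0, 0. reflexivity.
  - destruct a as [|a].
    + exists (S b), 0. rewrite IH, !pair_T. rewrite !Nat.add_0_r. simpl (0 + b).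
      rewrite (T_S b). lia.
    + exists a, (S b). rewrite IH, !pair_T. replace (a + S b) with (S a + b) by lia. lia.
Qed.

Lemma encode_inj p q : encode p = encode q -> p = q.
Proof.
  revert q; induction p; destruct q; simpl; intro H;
  repeat match goal with
  | H : pair _ _ = pair _ _ |- _ => apply pair_inj in H; destruct H
  end; try discriminate; try reflexivity;
  try (f_equal; auto).
Qed.

Ltac pinj := repeat match goal with H : pair _ _ = pair _ _ |- _ => apply pair_inj in H; destruct H; subst end.
Lemma eval_det p : forall x y, eval p x y -> forall y', eval p x y' -> y = y'.
Proof.
  induction p; intros x y H y' H'.
  1-5: inversion H; inversion H'; subst; pinj; auto.
  - inversion H; inversion H'; subst; pinj; f_equal; eauto.
  - inversion H; inversion H'; subst.
    match goal with H1 : eval p2 x ?a, H2 : eval p2 x ?b |- _ =>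
      assert (a = b) by eauto end. subst; eauto.
  - assert (Hn : forall n x y, eval (PPrim p1 p2) (pair x n) y ->
              forall y', eval (PPrim p1 p2) (pair x n) y' -> y = y').
    { clear -IHp1 IHp2. induction n; intros x y H y' H';
      inversion H; subst; inversion H'; subst; pinj; try discriminate; eauto.
      injection H2; injection H1; intros; subst.
      match goal with H1 : eval (PPrim _ _) _ ?a, H2 : eval (PPrim _ _) _ ?b |- _ =>
        assert (a = b) by eauto end. subst; eauto. }
    destruct (pair_surj x) as [a [n ->]]. eauto.
  - inversion H; inversion H'; subst.
    destruct (lt_eq_lt_dec y y') as [[Hl|]|Hl]; auto.
    + match goal with Hf : forall m, m < y' -> _ |- _ => destruct (Hf _ Hl) as [k Hk] end.
      match goal with H0 : eval p (pair x y) 0 |- _ => pose proof (IHp _ _ H0 _ Hk) end. discriminate.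
    + match goal with Hf : forall m, m < y -> _ |- _ => destruct (Hf _ Hl) as [k Hk] end.
      match goal with H0 : eval p (pair x y') 0 |- _ => pose proof (IHp _ _ H0 _ Hk) end. discriminate.
Qed.

Lemma phi_eval p x y : phi (encode p) x y <-> eval p x y.
Proof.
  split.
  - intros [q [Hq Hv]]. apply encode_inj in Hq. subst; auto.
  - intros; exists p; auto.
Qed.

Lemma phi_det e x y y' : phi e x y -> phi e x y' -> y = y'.
Proof.
  intros [p [Hp Hv]] [q [Hq Hv']]. subst. apply encode_inj in Hq. subst.
  eapply eval_det; eauto.
Qed.

Module P2.

Section AG.
Variables (dom : nat -> bool) (add : nat -> nat -> nat) (neg : nat -> nat) (z : nat).
Hypothesis HG : IsAbGroup dom add neg z.
Local Notation D x := (dom x = true).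

Lemma dz : D z. Proof. apply HG. Qed.
Lemma dadd x y : D x -> D y -> D (add x y). Proof. apply HG. Qed.
Lemma dneg x : D x -> D (neg x). Proof. apply HG. Qed.
Lemma aA x y w : D x -> D y -> D w -> add x (add y w) = add (add x y) w. Proof. apply HG. Qed.
Lemma aC x y : D x -> D y -> add x y = add y x. Proof. apply HG. Qed.
Lemma a0l x : D x -> add z x = x. Proof. apply HG. Qed.
Lemma aNl x : D x -> add (neg x) x = z. Proof. apply HG. Qed.
Lemma a0r x : D x -> add x z = x.
Proof. intros; rewrite aC; auto using dz, a0l. Qed.
Lemma aNr x : D x -> add x (neg x) = z.
Proof. intros; rewrite aC; auto using dneg, aNl. Qed.

Hint Resolve dz dadd dneg : grp.

Lemma cancel_l a x y : D a -> D x -> D y -> add a x = add a y -> x = y.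
Proof.
  intros Ha Hx Hy H.
  rewrite <- (a0l x), <- (a0l y), <- (aNl a), <- !aA by auto with grp.
  rewrite H; reflexivity.
Qed.

Lemma neg_uniq x y : D x -> D y -> add x y = z -> y = neg x.
Proof.
  intros Hx Hy H. apply (cancel_l x); auto with grp. rewrite aNr; auto.
Qed.

Lemma neg_neg x : D x -> neg (neg x) = x.
Proof. intros; symmetry; apply neg_uniq; auto with grp. apply aNl; auto. Qed.

Lemma neg_z : neg z = z.
Proof. symmetry; apply neg_uniq; auto with grp. apply a0l; auto with grp. Qed.

Lemma neg_add x y : D x -> D y -> neg (add x y) = add (neg x) (neg y).
Proof.
  intros. symmetry; apply neg_uniq; auto with grp.
  rewrite (aC (neg x)) by auto with grp.
  rewrite <- aA, (aA y) by auto with grp. rewrite aNr, a0l; auto with grp; apply aNr; auto.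
Qed.

Lemma a4 a b c d : D a -> D b -> D c -> D d ->
  add (add a b) (add c d) = add (add a c) (add b d).
Proof.
  intros. rewrite <- !aA by auto with grp. f_equal.
  rewrite !aA by auto with grp. f_equal. apply aC; auto.
Qed.

Definition nm n x := natmul add z n x.
Lemma nm_S n x : nm (S n) x = add x (nm n x). Proof. reflexivity. Qed.
Lemma nm_0 x : nm 0 x = z. Proof. reflexivity. Qed.
Lemma dnm n x : D x -> D (nm n x).
Proof. induction n; intros; [apply dz|]. rewrite nm_S; auto with grp. Qed.
Hint Resolve dnm : grp.
Lemma nm_add n m x : D x -> nm (n + m) x = add (nm n x) (nm m x).
Proof.
  intros Hx; induction n.
  - rewrite Nat.add_0_l, nm_0, a0l; auto with grp.
  - rewrite Nat.add_succ_l, !nm_S, IHn, aA; auto with grp.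
Qed.
Lemma nm_distr n x y : D x -> D y -> nm n (add x y) = add (nm n x) (nm n y).
Proof.
  intros Hx Hy; induction n.
  - rewrite !nm_0, a0l; auto with grp.
  - rewrite !nm_S, IHn, a4; auto with grp.
Qed.
Lemma nm_neg n x : D x -> nm n (neg x) = neg (nm n x).
Proof.
  intros Hx; induction n.
  - rewrite !nm_0, neg_z; auto.
  - rewrite !nm_S, IHn, neg_add; auto with grp.
Qed.
Lemma nm_z n : nm n z = z.
Proof. induction n; auto. rewrite nm_S, IHn, a0l; auto with grp. Qed.

Definition zm (k : Z) x := if Z.leb 0 k then nm (Z.to_nat k) x else neg (nm (Z.to_nat (- k)) x).
Lemma dzm k x : D x -> D (zm k x).
Proof. unfold zm; destruct (Z.leb 0 k); auto with grp. Qed.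
Hint Resolve dzm : grp.

Lemma zm_0 x : zm 0 x = z. Proof. reflexivity. Qed.
Lemma zm_nat n x : zm (Z.of_nat n) x = nm n x.
Proof. unfold zm. destruct (Z.leb_spec 0 (Z.of_nat n)); [|lia]. rewrite Nat2Z.id; auto. Qed.
Lemma zm_negnat n x : zm (- Z.of_nat n) x = neg (nm n x).
Proof.
  unfold zm. destruct (Z.leb_spec 0 (- Z.of_nat n)).
  - assert (n = 0) by lia. subst. change (nm 0 x = neg (nm 0 x)). rewrite nm_0, neg_z; auto.
  - rewrite Z.opp_involutive, Nat2Z.id; auto.
Qed.

Local Open Scope Z_scope.
Lemma zm_succ k x : D x -> zm (Z.succ k) x = add x (zm k x).
Proof.
  intros Hx. destruct (Z.leb_spec 0 k).
  - replace (Z.succ k) with (Z.of_nat (S (Z.to_nat k))) by lia.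
    replace k with (Z.of_nat (Z.to_nat k)) at 2 by lia.
    rewrite !zm_nat; auto.
  - set (n := Z.to_nat (- Z.succ k)).
    assert (E1 : Z.succ k = - Z.of_nat n) by lia.
    assert (E2 : k = - Z.of_nat (S n)) by lia.
    rewrite E1, E2, !zm_negnat, nm_S, neg_add, aA, aNr, a0l; auto with grp.
Qed.

Lemma zm_pred k x : D x -> zm (Z.pred k) x = add (neg x) (zm k x).
Proof.
  intros Hx. rewrite <- (Z.succ_pred k) at 2. rewrite zm_succ, aA, aNl, a0l; auto with grp.
Qed.

Lemma zm_add k l x : D x -> zm (k + l) x = add (zm k x) (zm l x).
Proof.
  intros Hx. induction l using Z.peano_ind.
  - rewrite Z.add_0_r, zm_0, a0r; auto with grp.
  - rewrite Z.add_succ_r, !zm_succ, IHl, !aA, (aC x); auto with grp.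
  - rewrite Z.add_pred_r, !zm_pred, IHl, !aA, (aC (neg x)); auto with grp.
Qed.

Lemma zm_distr k x y : D x -> D y -> zm k (add x y) = add (zm k x) (zm k y).
Proof.
  intros Hx Hy. induction k using Z.peano_ind.
  - rewrite !zm_0, a0l; auto with grp.
  - rewrite !zm_succ, IHk, a4; auto with grp.
  - rewrite !zm_pred, IHk, neg_add, a4; auto with grp.
Qed.

Lemma zm_opp k x : D x -> zm (- k) x = neg (zm k x).
Proof.
  intros Hx. induction k using Z.peano_ind.
  - simpl. rewrite zm_0, neg_z; auto.
  - rewrite Z.opp_succ, zm_pred, zm_succ, IHk, neg_add; auto with grp.
  - rewrite Z.opp_pred, zm_pred, zm_succ, IHk, neg_add, neg_neg; auto with grp.
Qed.

Lemma zm_mul k l x : D x -> zm (k * l) x = zm k (zm l x).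
Proof.
  intros Hx. induction k using Z.peano_ind.
  - reflexivity.
  - rewrite Z.mul_succ_l, zm_add, zm_succ, IHk, aC; auto with grp.
  - rewrite Z.mul_pred_l, <- Z.add_opp_r, zm_add, zm_pred, IHk, aC, zm_opp; auto with grp.
Qed.


Section Sub.
Variable mem : nat -> bool.
Hypothesis HS : IsSubgroup dom add neg z mem.
Lemma mdom x : mem x = true -> D x. Proof. apply HS. Qed.
Lemma mz : mem z = true. Proof. apply HS. Qed.
Lemma madd x y : mem x = true -> mem y = true -> mem (add x y) = true. Proof. apply HS. Qed.
Lemma mneg x : mem x = true -> mem (neg x) = true. Proof. apply HS. Qed.
Lemma mzm k x : mem x = true -> mem (zm k x) = true.
Proof.
  intros Hx. induction k using Z.peano_ind.
  - apply mz.
  - rewrite zm_succ by (apply mdom; auto). apply madd; auto.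
  - rewrite zm_pred by (apply mdom; auto). apply madd; auto using mneg.
Qed.
End Sub.

Lemma cyc_zm a y : InCyclic add neg z a y <-> exists k, y = zm k a.
Proof.
  split.
  - intros [n [H|H]]; subst.
    + exists (Z.of_nat n). rewrite zm_nat; reflexivity.
    + exists (- Z.of_nat n). rewrite zm_negnat; reflexivity.
  - intros [k ->]. unfold zm. destruct (Z.leb 0 k).
    + exists (Z.to_nat k); left; reflexivity.
    + exists (Z.to_nat (- k)); right; reflexivity.
Qed.

Section Hom.
Variables (memA memB : nat -> bool) (h : nat -> nat).
Hypothesis HA : IsSubgroup dom add neg z memA.
Hypothesis HB : IsSubgroup dom add neg z memB.
Hypothesis Hmap : forall x, memA x = true -> memB (h x) = true.
Hypothesis Hhom : forall x y, memA x = true -> memA y = true -> h (add x y) = add (h x) (h y).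
Lemma h_z : h z = z.
Proof.
  pose proof (mz _ HA) as Hz. pose proof (mdom _ HB _ (Hmap _ Hz)) as Dh.
  apply (cancel_l (h z)); auto with grp. rewrite a0r, <- Hhom, a0l; auto with grp.
Qed.
Lemma h_neg x : memA x = true -> h (neg x) = neg (h x).
Proof.
  intros Hx. pose proof (mdom _ HB _ (Hmap _ Hx)).
  pose proof (mdom _ HB _ (Hmap _ (mneg _ HA _ Hx))).
  pose proof (mdom _ HA _ Hx).
  apply neg_uniq; auto.
  rewrite <- Hhom, aNr, h_z; auto using mneg.
Qed.
Lemma h_zm k x : memA x = true -> h (zm k x) = zm k (h x).
Proof.
  intros Hx. pose proof (mdom _ HB _ (Hmap _ Hx)).
  induction k using Z.peano_ind.
  - apply h_z.
  - pose proof (mdom _ HA _ Hx). rewrite !zm_succ, Hhom, IHk; auto using mzm.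
  - pose proof (mdom _ HA _ Hx). rewrite !zm_pred, Hhom, IHk, h_neg; auto using mzm, mneg.
Qed.
End Hom.

End AG.

End P2.
Import P2.

Section Math.
Variables (dom : nat -> bool) (add : nat -> nat -> nat) (neg : nat -> nat) (z : nat).
Hypothesis HG : IsAbGroup dom add neg z.
Local Notation D x := (dom x = true).
Local Notation zm := (zm add neg z).
Let dz := @P2.dz dom add neg z HG.
Let dadd := @P2.dadd dom add neg z HG.
Let dneg := @P2.dneg dom add neg z HG.
Let aA := @P2.aA dom add neg z HG.
Let aC := @P2.aC dom add neg z HG.
Let a0l := @P2.a0l dom add neg z HG.
Let aNl := @P2.aNl dom add neg z HG.
Let a0r := @P2.a0r dom add neg z HG.
Let aNr := @P2.aNr dom add neg z HG.
Let cancel_l := @P2.cancel_l dom add neg z HG.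
Let neg_uniq := @P2.neg_uniq dom add neg z HG.
Let neg_neg := @P2.neg_neg dom add neg z HG.
Let neg_z := @P2.neg_z dom add neg z HG.
Let neg_add := @P2.neg_add dom add neg z HG.
Let a4 := @P2.a4 dom add neg z HG.
Let dnm := @P2.dnm dom add neg z HG.
Let nm_add := @P2.nm_add dom add neg z HG.
Let nm_distr := @P2.nm_distr dom add neg z HG.
Let nm_neg := @P2.nm_neg dom add neg z HG.
Let nm_z := @P2.nm_z dom add neg z HG.
Let dzm := @P2.dzm dom add neg z HG.
Let zm_negnat := @P2.zm_negnat dom add neg z HG.
Let zm_succ := @P2.zm_succ dom add neg z HG.
Let zm_pred := @P2.zm_pred dom add neg z HG.
Let zm_add := @P2.zm_add dom add neg z HG.
Let zm_distr := @P2.zm_distr dom add neg z HG.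
Let zm_opp := @P2.zm_opp dom add neg z HG.
Let zm_mul := @P2.zm_mul dom add neg z HG.
Let mzm := @P2.mzm dom add neg z HG.
Let cyc_zm := @P2.cyc_zm dom add neg z HG.
Let h_z := @P2.h_z dom add neg z HG.
Let h_neg := @P2.h_neg dom add neg z HG.
Let h_zm := @P2.h_zm dom add neg z HG.
Let zm_0 := @P2.zm_0 add neg z.
Let zm_nat := @P2.zm_nat add neg z.
Let nm_S := @P2.nm_S add z.
Let nm_0 := @P2.nm_0 add z.
Let mdom := @P2.mdom dom add neg z.
Let mz := @P2.mz dom add neg z.
Let madd := @P2.madd dom add neg z.
Let mneg := @P2.mneg dom add neg z.
Hint Resolve dz dadd dneg dzm dnm : grp.

Lemma zm_z k : zm k z = z.
Proof.
  induction k using Z.peano_ind.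
  - reflexivity.
  - rewrite zm_succ, IHk, a0l; auto using dz.
  - rewrite zm_pred, IHk, neg_z, a0l; auto using dz.
Qed.

Lemma key (memA memG memB memH : nat -> bool) (Dm : nat -> Prop) alpha beta u v :
  IsSubgroup dom add neg z memA -> IsSubgroup dom add neg z memG ->
  IsSubgroup dom add neg z memB -> IsSubgroup dom add neg z memH ->
  (forall x, Dm x <-> memG x = true /\ memH x = true) ->
  InternalDirectSum add z (fun x => D x) (fun x => memA x = true) (fun x => memG x = true) ->
  InternalDirectSum add z (fun x => D x) (fun x => memB x = true) (fun x => memH x = true) ->
  InternalDirectSum add z (fun x => memG x = true) (InCyclic add neg z u) Dm ->
  InternalDirectSum add z (fun x => memH x = true) (InCyclic add neg z v) Dm ->
  memG u = true -> memH v = true ->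
  memA alpha = true -> (forall x, memA x = true -> exists k, x = zm k alpha) ->
  memB beta = true ->
  (forall k, zm k alpha = z <-> zm k beta = z) ->
  forall m, zm m u = z -> zm m v = z.
Proof.
  intros SA SG SB SH HDm [_ [_ [_ AG4]]] [_ [_ [BH3 _]]] [_ [_ [_ Gu4]]] [_ [_ [Hv3 _]]]
    Hu Hv Ha HAc Hb Hord m Hm.
  assert (Du : D u) by (exact (mdom _ SG _ Hu)).
  assert (Dv : D v) by (exact (mdom _ SH _ Hv)).
  assert (Dal : D alpha) by (exact (mdom _ SA _ Ha)).
  assert (Dbe : D beta) by (exact (mdom _ SB _ Hb)).
  assert (Hdm : forall d, Dm d -> D d) by (intros d Hd; apply HDm in Hd; eapply mdom; [exact SG| apply Hd]).
  assert (Hdz : forall k d, Dm d -> Dm (zm k d)).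
  { intros k d Hd. apply HDm in Hd. apply HDm. split; eapply mzm; eauto; apply Hd. }
  assert (Dec : forall x, D x -> exists i d, Dm d /\ zm m x = add (zm (m * i) alpha) (zm m d)).
  { intros x Dx. destruct (AG4 x Dx) as [a1 [g1 [Ha1 [Hg1 ->]]]].
    destruct (HAc _ Ha1) as [i ->].
    destruct (Gu4 g1 Hg1) as [c1 [d1 [Hc1 [Hd1 ->]]]].
    apply cyc_zm in Hc1. destruct Hc1 as [j ->].
    exists i, d1. split; auto.
    assert (Dd1 : D d1) by auto.
    assert (Hz0 : zm m (zm j u) = z).
    { rewrite <- zm_mul, Z.mul_comm, zm_mul, Hm, zm_z; auto. }
    rewrite !zm_distr, Hz0, a0l, <- (zm_mul m i); auto with grp. }
  destruct (Dec beta Dbe) as [i [d1 [Hd1 E1]]].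
  destruct (Dec v Dv) as [i' [d2 [Hd2 E2]]].
  assert (Dd1 : D d1) by auto. assert (Dd2 : D d2) by auto.
  set (b := zm i' (zm m beta)).
  set (w := zm i (zm m v)).
  set (e1 := zm i' (zm m d1)). set (e2 := zm i (zm m d2)).
  set (P := zm (i' * (m * i)) alpha).
  assert (Eb : b = add P e1).
  { unfold b, P, e1. rewrite E1, zm_distr, <- (zm_mul i'); auto with grp. }
  assert (Ew : w = add P e2).
  { unfold w, P, e2. rewrite E2, zm_distr, <- (zm_mul i); auto with grp.
    f_equal. f_equal. ring. }
  assert (De1 : Dm e1) by (unfold e1; apply Hdz, Hdz; auto).
  assert (De2 : Dm e2) by (unfold e2; apply Hdz, Hdz; auto).
  assert (DP : D P) by (unfold P; auto with grp).
  assert (Ebw : b = add w (add (neg e2) e1)).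
  { rewrite Eb, Ew. rewrite <- aA, (aA e2), aNr, a0l; auto with grp. }
  assert (HbB : memB b = true) by (unfold b; eapply mzm; eauto; eapply mzm; eauto).
  assert (HbH : memH b = true).
  { rewrite Ebw. apply (madd _ SH).
    - unfold w. apply (mzm _ SH). apply (mzm _ SH). exact Hv.
    - apply HDm in De1. apply HDm in De2.
      apply (madd _ SH); [apply (mneg _ SH)|]; tauto. }
  assert (Hb0 : b = z) by (apply BH3; auto).
  assert (Ha0 : zm (i' * m) alpha = z).
  { apply Hord. unfold b in Hb0. rewrite zm_mul; auto. }
  assert (E3 : zm m v = zm m d2).
  { rewrite E2, Z.mul_comm, Ha0, a0l; auto with grp. }
  apply Hv3.
  - apply cyc_zm. eauto.
  - rewrite E3. apply Hdz; auto.
Qed.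

End Math.

Section Iso.
Variables (dom : nat -> bool) (add : nat -> nat -> nat) (neg : nat -> nat) (z : nat).
Hypothesis HG : IsAbGroup dom add neg z.
Local Notation D x := (dom x = true).
Local Notation zm := (zm add neg z).
Local Notation nm := (nm add z).
Variables (memA memB memG memH : nat -> bool) (u v : nat).
Hypotheses (SA : IsSubgroup dom add neg z memA) (SB : IsSubgroup dom add neg z memB)
  (SG : IsSubgroup dom add neg z memG) (SH : IsSubgroup dom add neg z memH).
Hypothesis HAG : InternalDirectSum add z (fun x => D x) (fun x => memA x = true) (fun x => memG x = true).
Hypothesis HBH : InternalDirectSum add z (fun x => D x) (fun x => memB x = true) (fun x => memH x = true).
Hypothesis Hiso : SubgroupsIsomorphic add memA memB.
Hypothesis HcA : IsCyclic add neg z memA.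
Hypotheses (Hu : memG u = true) (Hv : memH v = true).
Hypothesis HGu : InternalDirectSum add z (fun x => memG x = true)
      (InCyclic add neg z u) (fun x => memG x = true /\ memH x = true).
Hypothesis HHv : InternalDirectSum add z (fun x => memH x = true)
      (InCyclic add neg z v) (fun x => memG x = true /\ memH x = true).
Local Notation Dm d := (memG d = true /\ memH d = true).

Let dz := @P2.dz dom add neg z HG.
Let dadd := @P2.dadd dom add neg z HG.
Let dneg := @P2.dneg dom add neg z HG.
Let aA := @P2.aA dom add neg z HG.
Let aC := @P2.aC dom add neg z HG.
Let a0l := @P2.a0l dom add neg z HG.
Let aNl := @P2.aNl dom add neg z HG.
Let a0r := @P2.a0r dom add neg z HG.
Let aNr := @P2.aNr dom add neg z HG.
Let cancel_l := @P2.cancel_l dom add neg z HG.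
Let neg_uniq := @P2.neg_uniq dom add neg z HG.
Let neg_neg := @P2.neg_neg dom add neg z HG.
Let neg_z := @P2.neg_z dom add neg z HG.
Let neg_add := @P2.neg_add dom add neg z HG.
Let a4 := @P2.a4 dom add neg z HG.
Let dnm := @P2.dnm dom add neg z HG.
Let nm_add := @P2.nm_add dom add neg z HG.
Let nm_distr := @P2.nm_distr dom add neg z HG.
Let nm_neg := @P2.nm_neg dom add neg z HG.
Let nm_z := @P2.nm_z dom add neg z HG.
Let dzm := @P2.dzm dom add neg z HG.
Let zm_negnat := @P2.zm_negnat dom add neg z HG.
Let zm_succ := @P2.zm_succ dom add neg z HG.
Let zm_pred := @P2.zm_pred dom add neg z HG.
Let zm_add := @P2.zm_add dom add neg z HG.
Let zm_distr := @P2.zm_distr dom add neg z HG.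
Let zm_opp := @P2.zm_opp dom add neg z HG.
Let zm_mul := @P2.zm_mul dom add neg z HG.
Let mzm := @P2.mzm dom add neg z HG.
Let cyc_zm := @P2.cyc_zm dom add neg z HG.
Let h_z := @P2.h_z dom add neg z HG.
Let h_neg := @P2.h_neg dom add neg z HG.
Let h_zm := @P2.h_zm dom add neg z HG.
Let zm_0 := @P2.zm_0 add neg z.
Let zm_nat := @P2.zm_nat add neg z.
Let nm_S := @P2.nm_S add z.
Let nm_0 := @P2.nm_0 add z.
Let mdom := @P2.mdom dom add neg z.
Let mz := @P2.mz dom add neg z.
Let madd := @P2.madd dom add neg z.
Let mneg := @P2.mneg dom add neg z.
Let zm_z := @zm_z dom add neg z HG.
Hint Resolve dz dadd dneg dzm dnm : grp.

Lemma Du : D u. Proof. exact (mdom _ SG _ Hu). Qed.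
Lemma Dv : D v. Proof. exact (mdom _ SH _ Hv). Qed.
Hint Resolve Du Dv : grp.
Lemma DmD d : Dm d -> D d. Proof. intros [H _]; exact (mdom _ SG _ H). Qed.
Lemma Dm_add d d' : Dm d -> Dm d' -> Dm (add d d').
Proof. intros [] []; split; [apply (madd _ SG)|apply (madd _ SH)]; auto. Qed.
Lemma Dm_neg d : Dm d -> Dm (neg d).
Proof. intros []; split; [apply (mneg _ SG)|apply (mneg _ SH)]; auto. Qed.

Lemma ord_eq : forall m, zm m u = z <-> zm m v = z.
Proof.
  destruct HcA as [alpha [Ha HA]].
  destruct Hiso as [h [Hmap [Hinj [Hsurj Hhom]]]].
  set (beta := h alpha).
  assert (Hb : memB beta = true) by (apply Hmap; auto).
  assert (Hord : forall k, zm k alpha = z <-> zm k beta = z).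
  { intros k. unfold beta. rewrite <- (h_zm memA memB h SA SB Hmap Hhom k alpha Ha).
    split; intro E.
    - rewrite E. apply (h_z memA memB h SA SB Hmap Hhom).
    - apply Hinj; [apply (mzm _ SA); auto| apply (mz _ SA)|].
      rewrite E. symmetry; apply (h_z memA memB h SA SB Hmap Hhom). }
  assert (HAc : forall x, memA x = true -> exists k, x = zm k alpha).
  { intros x Hx. apply HA in Hx. apply cyc_zm in Hx. exact Hx. }
  assert (HBc : forall y, memB y = true -> exists k, y = zm k beta).
  { intros y Hy. destruct (Hsurj y Hy) as [x [Hx <-]]. destruct (HAc x Hx) as [k ->].
    exists k. unfold beta. apply (h_zm memA memB h SA SB Hmap Hhom k alpha Ha). }
  intros m; split.
  - apply (key dom add neg z HG memA memG memB memH (fun x => Dm x) alpha beta u v); auto; tauto.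
  - apply (key dom add neg z HG memB memH memA memG (fun x => Dm x) beta alpha v u); auto.
    + intros; tauto.
    + intros k; rewrite Hord; tauto.
Qed.

Lemma uniq_gen (memX : nat -> bool) w :
  D w ->
  InternalDirectSum add z (fun x => memX x = true) (InCyclic add neg z w) (fun x => Dm x) ->
  forall K K' d d', Dm d -> Dm d' -> add (zm K w) d = add (zm K' w) d' ->
  zm (K + - K') w = z /\ d = d'.
Proof.
  intros Dw [_ [_ [H3 _]]] K K' d d' Hd Hd' E.
  pose proof (DmD _ Hd). pose proof (DmD _ Hd').
  assert (Ee : add (zm (K + - K') w) d = d').
  { rewrite zm_add, zm_opp by auto.
    rewrite <- aA, (aC (neg (zm K' w)) d), aA, E, <- aA, (aC d'), aA, aNr, a0l by auto with grp.
    reflexivity. }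
  assert (Ee' : zm (K + - K') w = add d' (neg d)).
  { rewrite <- Ee, <- aA, aNr, a0r; auto with grp. }
  assert (Z0 : zm (K + - K') w = z).
  { apply H3. apply cyc_zm. eauto. rewrite Ee'. apply Dm_add; auto. apply Dm_neg; auto. }
  split; auto. rewrite <- Ee, Z0, a0l; auto.
Qed.

Definition IsoRel x y := memG x = true /\
  exists K d, Dm d /\ x = add (zm K u) d /\ y = add (zm K v) d.

Lemma rel_fun x y y' : IsoRel x y -> IsoRel x y' -> y = y'.
Proof.
  intros [_ [K [d [Hd [-> ->]]]]] [_ [K' [d' [Hd' [E ->]]]]].
  destruct (uniq_gen memG u Du HGu K K' d d' Hd Hd' E) as [Z0 <-].
  apply ord_eq in Z0. f_equal.
  replace K with ((K + - K') + K')%Z at 1 by ring.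
  rewrite zm_add, Z0, a0l; auto with grp.
Qed.

Lemma rel_inj x x' y : IsoRel x y -> IsoRel x' y -> x = x'.
Proof.
  intros [_ [K [d [Hd [-> ->]]]]] [_ [K' [d' [Hd' [-> E]]]]].
  destruct (uniq_gen memH v Dv HHv K K' d d' Hd Hd' E) as [Z0 <-].
  apply ord_eq in Z0. f_equal.
  replace K with ((K + - K') + K')%Z at 1 by ring.
  rewrite zm_add, Z0, a0l; auto with grp.
Qed.

Lemma rel_add x y x' y' : IsoRel x y -> IsoRel x' y' -> IsoRel (add x x') (add y y').
Proof.
  intros [Gx [K [d [Hd [Ex Ey]]]]] [Gx' [K' [d' [Hd' [Ex' Ey']]]]].
  pose proof (DmD _ Hd). pose proof (DmD _ Hd').
  split. { apply (madd _ SG); auto. }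
  exists (K + K')%Z, (add d d'). split; [apply Dm_add; auto|].
  subst. split.
  - rewrite zm_add, (a4 (zm K u) d (zm K' u) d'); auto with grp.
  - rewrite zm_add, (a4 (zm K v) d (zm K' v) d'); auto with grp.
Qed.

Lemma rel_ex x : memG x = true -> exists y, IsoRel x y /\ memH y = true.
Proof.
  intros Hx. destruct HGu as [_ [_ [_ H4]]].
  destruct (H4 x Hx) as [c [d [Hc [Hd ->]]]]. apply cyc_zm in Hc. destruct Hc as [K ->].
  exists (add (zm K v) d). split.
  - split; auto. exists K, d; auto.
  - apply (madd _ SH); [apply (mzm _ SH); auto| apply Hd].
Qed.

Lemma rel_surj y : memH y = true -> exists x, memG x = true /\ IsoRel x y.
Proof.
  intros Hy. destruct HHv as [_ [_ [_ H4]]].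
  destruct (H4 y Hy) as [c [d [Hc [Hd ->]]]]. apply cyc_zm in Hc. destruct Hc as [K ->].
  assert (Gx : memG (add (zm K u) d) = true).
  { apply (madd _ SG); [apply (mzm _ SG); auto| apply Hd]. }
  exists (add (zm K u) d). split; auto. split; auto. exists K, d; auto.
Qed.

Definition ws (s : nat) := if Nat.eqb s 0 then u else neg u.
Definition ws' (s : nat) := if Nat.eqb s 0 then neg v else v.

Lemma out_rel x k s : memG x = true -> memH (add x (nm k (ws s))) = true ->
  IsoRel x (add (add x (nm k (ws s))) (nm k (ws' s))).
Proof.
  intros Hx Hm. pose proof (mdom _ SG _ Hx) as Dx.
  assert (Hd : Dm (add x (nm k (ws s)))).
  { split; auto. apply (madd _ SG); auto. unfold ws; destruct (Nat.eqb s 0).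
    - rewrite <- zm_nat. apply (mzm _ SG); auto.
    - rewrite <- zm_nat. apply (mzm _ SG); apply (mneg _ SG); auto. }
  split; auto. unfold ws, ws' in *. destruct (Nat.eqb s 0).
  - exists (- Z.of_nat k)%Z, (add x (nm k u)). split; auto.
    rewrite !zm_negnat. split.
    + rewrite (aC x), aA, aNl, a0l; auto with grp.
    + rewrite nm_neg, aC; auto with grp.
  - exists (Z.of_nat k), (add x (nm k (neg u))). split; auto.
    rewrite !zm_nat. split.
    + rewrite nm_neg, (aC x), aA, aNr, a0l; auto with grp.
    + rewrite aC; auto with grp.
Qed.

Lemma search_ex x : memG x = true -> exists k s, memH (add x (nm k (ws s))) = true.
Proof.
  intros Hx. destruct HGu as [_ [_ [_ H4]]].
  destruct (H4 x Hx) as [c [d [Hc [Hd ->]]]]. apply cyc_zm in Hc. destruct Hc as [K ->].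
  pose proof (DmD _ Hd).
  destruct (Z.leb_spec 0 K).
  - exists (Z.to_nat K), 1. unfold ws; simpl.
    replace K with (Z.of_nat (Z.to_nat K)) at 1 by lia. rewrite zm_nat, nm_neg by auto with grp.
    rewrite (aC _ d), <- aA, aNr, a0r; auto with grp. apply Hd.
  - exists (Z.to_nat (- K)), 0. unfold ws; simpl.
    replace K with (- Z.of_nat (Z.to_nat (- K)))%Z at 1 by lia. rewrite zm_negnat.
    rewrite (aC _ d), <- aA, aNl, a0r; auto with grp. apply Hd.
Qed.

End Iso.

Fixpoint cn (n : nat) : prf := match n with 0 => PZero | S k => PComp PSucc (cn k) end.
Lemma eval_cn n x : eval (cn n) x n.
Proof. induction n; simpl; [constructor| econstructor; [eauto| constructor]]. Qed.

Lemma eval_prim f g x (r : nat -> nat) : eval f x (r 0) ->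
  (forall n, eval g (pair x (pair n (r n))) (r (S n))) ->
  forall n, eval (PPrim f g) (pair x n) (r n).
Proof. intros H0 HS n; induction n; [constructor; auto| econstructor; eauto]. Qed.

Definition ADDN := PPrim PId (PComp PSucc (PComp PSnd PSnd)).
Lemma eval_ADDN a b : eval ADDN (pair a b) (a + b).
Proof.
  apply (eval_prim _ _ _ (fun n => a + n)).
  - rewrite Nat.add_0_r; constructor.
  - intros n. eapply ev_comp; [eapply ev_comp; [apply ev_snd| apply ev_snd]|].
    rewrite Nat.add_succ_r. constructor.
Qed.

Definition TRI := PPrim PZero (PComp PSucc (PComp ADDN PSnd)).
Lemma eval_TRI x n : eval TRI (pair x n) (T n).
Proof.
  apply (eval_prim _ _ _ T).
  - constructor.
  - intros k. rewrite T_S. eapply ev_comp; [eapply ev_comp; [apply ev_snd| apply eval_ADDN]|].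
    replace (T k + S k) with (S (k + T k)) by lia. constructor.
Qed.

Definition PAIRP := PComp ADDN (PPair (PComp TRI (PPair PZero ADDN)) PSnd).
Lemma eval_PAIRP a b : eval PAIRP (pair a b) (pair a b).
Proof.
  eapply ev_comp; [|rewrite pair_T; apply eval_ADDN].
  apply ev_pair; [|apply ev_snd].
  eapply ev_comp; [|apply eval_TRI]. apply ev_pair; [constructor| apply eval_ADDN].
Qed.

Definition cbin k Qa Qb := PComp PAIRP (PPair (cn k) (PComp PAIRP (PPair Qa Qb))).
Lemma eval_cbin k Qa Qb x a b : eval Qa x a -> eval Qb x b ->
  eval (cbin k Qa Qb) x (pair k (pair a b)).
Proof.
  intros. eapply ev_comp; [|apply eval_PAIRP]. apply ev_pair; [apply eval_cn|].
  eapply ev_comp; [|apply eval_PAIRP]. apply ev_pair; auto.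
Qed.
Definition cun Qa := PComp PAIRP (PPair (cn 8) Qa).
Lemma eval_cun Qa x a : eval Qa x a -> eval (cun Qa) x (pair 8 a).
Proof. intros. eapply ev_comp; [|apply eval_PAIRP]. apply ev_pair; [apply eval_cn| auto]. Qed.

Fixpoint quote (p : prf) : prf :=
  match p with
  | PZero => cn (encode PZero) | PSucc => cn (encode PSucc) | PId => cn (encode PId)
  | PFst => cn (encode PFst) | PSnd => cn (encode PSnd)
  | PPair f g => cbin 5 (quote f) (quote g)
  | PComp f g => cbin 6 (quote f) (quote g)
  | PPrim f g => cbin 7 (quote f) (quote g)
  | PMu f => cun (quote f)
  end.
Lemma quote_ok p x : eval (quote p) x (encode p).
Proof. induction p; first [apply eval_cn | apply eval_cbin; auto | apply eval_cun; auto]. Qed.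

Inductive tm := TH (i : nat) | TP (p : prf) | TPair (a b : tm) | TComp (a b : tm)
  | TPrim (a b : tm) | TMu (a : tm).
Fixpoint inst (env : nat -> prf) (t : tm) : prf :=
  match t with
  | TH i => env i | TP p => p
  | TPair a b => PPair (inst env a) (inst env b)
  | TComp a b => PComp (inst env a) (inst env b)
  | TPrim a b => PPrim (inst env a) (inst env b)
  | TMu a => PMu (inst env a)
  end.
Fixpoint ctm (henv : nat -> prf) (t : tm) : prf :=
  match t with
  | TH i => henv i | TP p => quote p
  | TPair a b => cbin 5 (ctm henv a) (ctm henv b)
  | TComp a b => cbin 6 (ctm henv a) (ctm henv b)
  | TPrim a b => cbin 7 (ctm henv a) (ctm henv b)
  | TMu a => cun (ctm henv a)
  end.
Lemma ctm_ok henv env x : (forall i, eval (henv i) x (encode (env i))) ->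
  forall t, eval (ctm henv t) x (encode (inst env t)).
Proof. intros H t; induction t; first [apply H | apply quote_ok | apply eval_cbin; auto | apply eval_cun; auto]. Qed.

Definition CNC := PComp (PPrim (cn (encode PZero)) (cbin 6 (cn (encode PSucc)) (PComp PSnd PSnd)))
  (PPair PZero PId).
Lemma eval_CNC n : eval CNC n (encode (cn n)).
Proof.
  eapply ev_comp; [apply ev_pair; constructor|].
  apply (eval_prim _ _ _ (fun n => encode (cn n))).
  - apply eval_cn.
  - intros k. simpl (encode (cn (S k))). apply eval_cbin; [apply eval_cn|].
    eapply ev_comp; apply ev_snd.
Qed.

Lemma least (P : nat -> Prop) : (exists n, P n) -> exists n, P n /\ forall m, m < n -> ~ P m.
Proof.
  intros [n Hn]. induction n as [n IH] using (well_founded_induction lt_wf).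
  destruct (classic (exists m, m < n /\ P m)) as [[m [Hm Pm]]|Hno].
  - exact (IH m Hm Pm).
  - exists n; split; auto. intros m Hm Pm; apply Hno; eauto.
Qed.

Definition tK n := TP (cn n).
Definition tADD a b := TComp (TH 0) (TPair (tK 1) (TPair a b)).
Definition tNEG a := TComp (TH 0) (TPair (tK 2) a).
Definition tZERO := TComp (TH 0) (tK (pair 3 0)).
Definition NOTP := PPrim (cn 1) PZero.
Definition tNOT a := TComp (TP NOTP) (TPair (tK 0) a).
Definition tNMp := TPrim tZERO (tADD (TP PFst) (TComp (TP PSnd) (TP PSnd))).
Definition tNM w k := TComp tNMp (TPair w k).
Definition tSEL a b s := TComp (TPrim a b) (TPair (tK 0) s).
Definition tk := TComp (TP PFst) (TP PSnd).
Definition ts := TComp (TP PSnd) (TP PSnd).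
Definition tdd := tADD (TP PFst) (tNM (tSEL (TH 2) (tNEG (TH 2)) ts) tk).
Definition tF := tNOT (TComp (TH 1) tdd).
Definition tOUT := tADD tdd (tNM (tSEL (tNEG (TH 3)) (TH 3) ts) tk).
Definition tPr := TComp tOUT (TPair (TP PId) (TMu tF)).

Section Sem.
Variables (dom : nat -> bool) (add : nat -> nat -> nat) (neg : nat -> nat) (z : nat).
Hypothesis HG : IsAbGroup dom add neg z.
Local Notation D x := (dom x = true).
Variables (memH : nat -> bool) (u v : nat) (env : nat -> prf).
Hypothesis HE1 : forall a b, D a -> D b -> eval (env 0) (pair 1 (pair a b)) (add a b).
Hypothesis HE2 : forall a, D a -> eval (env 0) (pair 2 a) (neg a).
Hypothesis HE3 : eval (env 0) (pair 3 0) z.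
Hypothesis HH : forall a, eval (env 1) a (if memH a then 1 else 0).
Hypothesis HU : forall x, eval (env 2) x u.
Hypothesis HV : forall x, eval (env 3) x v.
Hypotheses (Du : D u) (Dv : D v).
Let dadd := @P2.dadd dom add neg z HG.
Let dneg := @P2.dneg dom add neg z HG.
Let dnm := @P2.dnm dom add neg z HG.
Hint Resolve dadd dneg dnm : grp.

Lemma S_ADD a b x va vb : eval (inst env a) x va -> eval (inst env b) x vb -> D va -> D vb ->
  eval (inst env (tADD a b)) x (add va vb).
Proof.
  intros. eapply ev_comp; [|apply HE1; auto].
  apply ev_pair; [apply eval_cn| apply ev_pair; auto].
Qed.
Lemma S_NEG a x va : eval (inst env a) x va -> D va -> eval (inst env (tNEG a)) x (neg va).
Proof. intros. eapply ev_comp; [|apply HE2; auto]. apply ev_pair; [apply eval_cn| auto]. Qed.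
Lemma S_ZERO x : eval (inst env tZERO) x z.
Proof. eapply ev_comp; [apply eval_cn| apply HE3]. Qed.
Lemma S_NOT a x b : eval (inst env a) x b ->
  eval (inst env (tNOT a)) x (match b with 0 => 1 | S _ => 0 end).
Proof.
  intros. eapply ev_comp; [apply ev_pair; [apply eval_cn| eauto]|].
  apply (eval_prim _ _ _ (fun b => match b with 0 => 1 | S _ => 0 end)).
  - apply eval_cn.
  - intros; constructor.
Qed.
Lemma S_NM w k x vw n : eval (inst env w) x vw -> eval (inst env k) x n -> D vw ->
  eval (inst env (tNM w k)) x (nm add z n vw).
Proof.
  intros. eapply ev_comp; [apply ev_pair; eauto|].
  apply (eval_prim _ _ _ (fun n => nm add z n vw)).
  - apply S_ZERO.
  - intros m. apply S_ADD; auto with grp.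
    + apply ev_fst.
    + eapply ev_comp; apply ev_snd.
    + exact (dnm m vw H1).
Qed.
Lemma S_SEL a b s x va vb n : (forall y, eval (inst env a) y va) -> (forall y, eval (inst env b) y vb) ->
  eval (inst env s) x n -> eval (inst env (tSEL a b s)) x (if Nat.eqb n 0 then va else vb).
Proof.
  intros. eapply ev_comp; [apply ev_pair; [apply eval_cn| eauto]|].
  apply (eval_prim _ _ _ (fun n => if Nat.eqb n 0 then va else vb)); simpl; auto.
Qed.

Lemma S_dd x k s : D x -> eval (inst env tdd) (pair x (pair k s)) (add x (nm add z k (ws neg u s))).
Proof.
  intros. apply S_ADD; [apply ev_fst| | auto|].
  - apply S_NM.
    + apply S_SEL; [apply HU| intros; apply S_NEG; auto| eapply ev_comp; apply ev_snd].
    + eapply ev_comp; [apply ev_snd| apply ev_fst].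
    + unfold ws; destruct (Nat.eqb s 0); auto with grp.
  - apply dnm. unfold ws; destruct (Nat.eqb s 0); auto with grp.
Qed.

Lemma S_F x k s : D x -> eval (inst env tF) (pair x (pair k s))
  (if memH (add x (nm add z k (ws neg u s))) then 0 else 1).
Proof.
  intros. assert (E : eval (inst env (TComp (TH 1) tdd)) (pair x (pair k s))
    (if memH (add x (nm add z k (ws neg u s))) then 1 else 0))
    by (eapply ev_comp; [apply S_dd; auto| apply HH]).
  pose proof (S_NOT _ _ _ E) as E2. destruct (memH _); exact E2.
Qed.

Lemma S_OUT x k s : D x -> eval (inst env tOUT) (pair x (pair k s))
  (add (add x (nm add z k (ws neg u s))) (nm add z k (ws' neg v s))).
Proof.
  intros. assert (Dw : D (ws neg u s)) by (unfold ws; destruct (Nat.eqb s 0); auto with grp).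
  assert (Dw' : D (ws' neg v s)) by (unfold ws'; destruct (Nat.eqb s 0); auto with grp).
  apply S_ADD; [apply S_dd; auto| | auto with grp| auto with grp].
  apply S_NM; auto.
  - apply S_SEL; [intros; apply S_NEG; auto| apply HV| eapply ev_comp; apply ev_snd].
  - eapply ev_comp; [apply ev_snd| apply ev_fst].
Qed.

Lemma S_P x : D x -> (exists k s, memH (add x (nm add z k (ws neg u s))) = true) ->
  exists k s, memH (add x (nm add z k (ws neg u s))) = true /\
    eval (inst env tPr) x (add (add x (nm add z k (ws neg u s))) (nm add z k (ws' neg v s))).
Proof.
  intros Dx [k0 [s0 H0]].
  destruct (least (fun t => eval (inst env tF) (pair x t) 0)) as [t [Ht Hmin]].
  { exists (pair k0 s0). pose proof (S_F x k0 s0 Dx) as E. rewrite H0 in E. exact E. }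
  destruct (pair_surj t) as [k [s ->]].
  pose proof (S_F x k s Dx) as E.
  assert (Hm : memH (add x (nm add z k (ws neg u s))) = true).
  { destruct (memH (add x (nm add z k (ws neg u s)))) eqn:M; [reflexivity|].
    try rewrite M in E. pose proof (eval_det _ _ _ Ht _ E). discriminate. }
  exists k, s. split; auto.
  eapply ev_comp; [|apply S_OUT; auto].
  apply ev_pair; [constructor|].
  constructor; auto.
  intros m Hlt. destruct (pair_surj m) as [k' [s' ->]].
  pose proof (S_F x k' s' Dx) as E'.
  destruct (memH (add x (nm add z k' (ws neg u s')))) eqn:M; try rewrite M in E'.
  - exfalso; apply (Hmin _ Hlt); exact E'.
  - exists 0; exact E'.
Qed.

End Sem.

Definition henv (i : nat) : prf :=
  match i with
  | 0 => PFst
  | 1 => PComp PFst (PComp PSnd (PComp PSnd (PComp PSnd PSnd)))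
  | 2 => PComp CNC (PComp PFst (PComp PSnd (PComp PSnd (PComp PSnd (PComp PSnd PSnd)))))
  | 3 => PComp CNC (PComp PSnd (PComp PSnd (PComp PSnd (PComp PSnd (PComp PSnd PSnd)))))
  | _ => quote PZero
  end.
Definition FC := ctm henv tPr.

Ltac ex_tac := repeat (eapply ev_comp || apply ev_fst || apply ev_snd).

Theorem lemma2p4 :
  exists f : nat,
  forall (eE eA eB eG eH : nat)
    (domE : nat -> bool) (addE : nat -> nat -> nat) (negE : nat -> nat) (zE : nat)
    (memA memB memG memH : nat -> bool) (u v : nat),
    Presents eE domE addE negE zE ->
    IsAbGroup domE addE negE zE ->
    CharIndex eA memA -> CharIndex eB memB ->
    CharIndex eG memG -> CharIndex eH memH ->
    IsSubgroup domE addE negE zE memA -> IsSubgroup domE addE negE zE memB ->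
    IsSubgroup domE addE negE zE memG -> IsSubgroup domE addE negE zE memH ->
    InternalDirectSum addE zE (fun x => domE x = true)
      (fun x => memA x = true) (fun x => memG x = true) ->
    InternalDirectSum addE zE (fun x => domE x = true)
      (fun x => memB x = true) (fun x => memH x = true) ->
    SubgroupsIsomorphic addE memA memB ->
    IsCyclic addE negE zE memA -> IsCyclic addE negE zE memB ->
    memG u = true -> memH v = true ->
    InternalDirectSum addE zE (fun x => memG x = true)
      (InCyclic addE negE zE u) (fun x => memG x = true /\ memH x = true) ->
    InternalDirectSum addE zE (fun x => memH x = true)
      (InCyclic addE negE zE v) (fun x => memG x = true /\ memH x = true) ->
    exists i : nat,
      phi f (pair eE (pair eA (pair eB (pair eG (pair eH (pair u v)))))) i /\
      IsComputableIso i addE memG memH.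
Proof.
  exists (encode FC).
  intros eE eA eB eG eH domE addE negE zE memA memB memG memH u v
    HP HG _ _ _ HcH SA SB SG SH HAG HBH Hiso HcA _ Hu Hv HGu HHv.
  destruct HP as [_ [HP1 [HP2 HP3]]].
  destruct HP3 as [pE [EpE HE3]]. subst eE.
  destruct (HcH 0) as [pH [EpH _]]. subst eH.
  assert (HE1 : forall a b, domE a = true -> domE b = true ->
            eval pE (pair 1 (pair a b)) (addE a b)) by (intros; apply phi_eval; auto).
  assert (HE2 : forall a, domE a = true -> eval pE (pair 2 a) (negE a)) by (intros; apply phi_eval; auto).
  assert (HH : forall a, eval pH a (if memH a then 1 else 0)) by (intros; apply phi_eval; auto).
  set (env := fun i => match i with 0 => pE | 1 => pH | 2 => cn u | 3 => cn v | _ => PZero end).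
  assert (Du : domE u = true) by exact (mdom _ _ _ _ _ SG _ Hu).
  assert (Dv : domE v = true) by exact (mdom _ _ _ _ _ SH _ Hv).
  set (P := inst env tPr).
  assert (Prog : forall x, memG x = true -> exists y, eval P x y /\ IsoRel addE negE zE memG memH u v x y).
  { intros x Hx.
    destruct (S_P domE addE negE zE HG memH u v env HE1 HE2 HE3 HH
       (fun x => eval_cn u x) (fun x => eval_cn v x) Du Dv x (mdom _ _ _ _ _ SG _ Hx)
       (search_ex domE addE negE zE HG memG memH u SG Hu HGu x Hx)) as [k [s [Hm Ev]]].
    eexists; split; [exact Ev|].
    apply (out_rel domE addE negE zE HG memG memH u v SG SH Hu Hv); auto. }
  assert (Rel : forall x y, memG x = true -> eval P x y -> IsoRel addE negE zE memG memH u v x y).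
  { intros x y Hx Ev. destruct (Prog x Hx) as [y0 [Ev0 R0]].
    rewrite (eval_det _ _ _ Ev _ Ev0). exact R0. }
  pose proof (rel_fun domE addE negE zE HG memA memB memG memH u v SA SB SG SH HAG HBH Hiso HcA Hu Hv HGu HHv) as Rfun.
  pose proof (rel_inj domE addE negE zE HG memA memB memG memH u v SA SB SG SH HAG HBH Hiso HcA Hu Hv HGu HHv) as Rinj.
  pose proof (rel_add domE addE negE zE HG memG memH u v SG SH Hu Hv) as Radd.
  pose proof (rel_ex domE addE negE zE HG memG memH u v SH Hv HGu) as Rex.
  pose proof (rel_surj domE addE negE zE HG memG memH u v SG Hu HHv) as Rsurj.
  exists (encode P). split.
  - apply phi_eval. unfold FC, P. apply ctm_ok.
    intros [|[|[|[|i]]]]; simpl henv; simpl env.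
    + apply ev_fst.
    + ex_tac.
    + eapply ev_comp; [|apply eval_CNC]. ex_tac.
    + eapply ev_comp; [|apply eval_CNC]. ex_tac.
    + exact (quote_ok PZero _).
  - split; [|split; [|split]].
    + intros x Hx. destruct (Prog x Hx) as [y [Ev R]]. destruct (Rex x Hx) as [y' [R' Hy']].
      exists y; split; [apply phi_eval; auto|]. rewrite (Rfun _ _ _ R R'). exact Hy'.
    + intros x y w Hx Hy Ex Ey. apply phi_eval in Ex, Ey.
      exact (Rinj _ _ _ (Rel _ _ Hx Ex) (Rel _ _ Hy Ey)).
    + intros y Hy. destruct (Rsurj y Hy) as [x [Hx R]]. destruct (Prog x Hx) as [y0 [Ev R0]].
      exists x; split; auto. apply phi_eval. rewrite (Rfun _ _ _ R R0) in *. exact Ev.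
    + intros x y a b Hx Hy Ea Eb. apply phi_eval in Ea, Eb. apply phi_eval.
      pose proof (Radd _ _ _ _ (Rel _ _ Hx Ea) (Rel _ _ Hy Eb)) as R.
      assert (Gxy : memG (addE x y) = true) by exact (P2.madd _ _ _ _ _ SG _ _ Hx Hy).
      destruct (Prog _ Gxy) as [c [Ev Rc]]. rewrite (Rfun _ _ _ R Rc). exact Ev.
Qed.
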